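(* Let $1\le l\le s+1$ and let $\beta_1<\beta_2<\dots<\beta_l$ be indices in $\{0,\dots,s\}$. Define $$\mathcal{C}_{\beta_1\cdots\beta_l}=\{c_1+c_2+\dots+c_l:\ c_i\in\mathcal{I}_{\beta_i}\setminus\{0\},\ i=1,\dots,l\}\subseteq\mathcal{R},$$ on which $\langle\rho\rangle$ acts. Then $$N_{\langle\rho\rangle}(\mathcal{C}_{\beta_1\cdots\beta_l})=\frac{\prod_{i=1}^{l}(q^{d_{\beta_i}}-1)\cdot\gcd(1+t\alpha_{\beta_1},\dots,1+t\alpha_{\beta_l},n)}{tn}.$$
   Context: Standing setup: $q$ is a prime power, $n$ a positive integer with $\gcd(n,q)=1$, $\lambda\in\mathbb{F}_q^{*}$ has multiplicative order $t$ (so $t\mid q-1$). $\mathcal{R}=\mathbb{F}_q[x]/\langle x^n-\lambda\rangle$; vectors $(c_0,\dots,c_{n-1})\in\mathbb{F}_q^n$ are identified with $c_0+c_1x+\dots+c_{n-1}x^{n-1}\in\mathcal{R}$, and a $\lambda$-constacyclic code of length $n$ is an ideal of $\mathcal{R}$. Let $\zeta$ be a primitive $tn$-th root of unity in an extension $\mathbb{F}_{q^m}$ with $\zeta^n=\lambda$, so $x^n-\lambda=\prod_{i=0}^{n-1}(x-\zeta^{1+ti})$. The set $\mathcal{S}=\{1+ti:0\le i\le n-1\}$ (residues mod $tn$) is partitioned into the distinct $q$-cyclotomic cosets modulo $tn$, $C_{1+t\alpha_j}=\{(1+t\alpha_j)q^{h}\bmod tn: h\ge 0\}$, $j=0,\dots,s$,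 with $0=\alpha_0<\alpha_1<\dots<\alpha_s\le n-1$ and $d_j=|C_{1+t\alpha_j}|$. Let $m_j(x)=\prod_{h\in C_{1+t\alpha_j}}(x-\zeta^{h})$ (irreducible over $\mathbb{F}_q$), and let $\mathcal{I}_j$ be the ideal of $\mathcal{R}$ generated by $(x^n-\lambda)/m_j(x)$; this is an irreducible $\lambda$-constacyclic code of dimension $d_j$, said to correspond to the coset $C_{1+t\alpha_j}$, and $\mathcal{R}=\mathcal{I}_0\oplus\dots\oplus\mathcal{I}_s$. The cyclic shift $\rho:\mathcal{R}\to\mathcal{R}$ is $\rho(c(x))=xc(x)$, i.e. $(c_0,\dots,c_{n-1})\mapsto(\lambda c_{n-1},c_0,\dots,c_{n-2})$; $\langle\rho\rangle$ is the cyclic group it generates, of order $tn$. For a group $G$ acting on a finite set $X$, $N_G(X)$ denotes the number of $G$-orbits on $X$. *)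

(* Defs.v *)
From HB Require Import structures.
From mathcomp Require Import all_boot all_order all_algebra all_field.
Set Implicit Arguments.
Unset Strict Implicit.
Unset Printing Implicit Defensive.
Import GRing.Theory.
Local Open Scope ring_scope.

(* The ring R = F[x]/<x^n - lam>; elements of R are identified with row
   vectors (c_0,...,c_{n-1}) in F^n, i.e. with c_0 + c_1 x + ... + c_{n-1} x^{n-1}. *)

Definition polyR (F : finFieldType) (n : nat) (lam : F) : {poly F} :=
  'X^n - lam%:P.

Definition poly_of (F : finFieldType) (n : nat) (c : 'rV[F]_n) : {poly F} :=
  \sum_(i < n) c 0 i *: 'X^i.

Definition vec_of (F : finFieldType) (n : nat) (lam : F) (p : {poly F}) : 'rV[F]_n :=
  \row_(i < n) (p %% polyR n lam)`_i.

Definition rho (F : finFieldType) (n : nat) (lam : F) (c : 'rV[F]_n) : 'rV[F]_n :=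
  vec_of n lam ('X * poly_of c).

Definition gen_ideal (F : finFieldType) (n : nat) (lam : F) (g : {poly F})
  : {set 'rV[F]_n} :=
  [set vec_of n lam (g * poly_of a) | a : 'rV[F]_n].

(* the q-cyclotomic coset of r modulo m: { r q^h mod m : h >= 0 }, listed
   without repetition; h ranging over 0 <= h < m covers a full period. *)
Definition cycl_coset (q m r : nat) : seq nat :=
  undup [seq (r * q ^ h %% m)%N | h <- iota 0 m].

Definition coset_poly (F : finFieldType) (L : fieldExtType F) (z : L) (C : seq nat)
  : {poly L} :=
  \prod_(h <- C) ('X - (z ^+ h)%:P).

Definition descend (F : finFieldType) (L : fieldExtType F) (P : {poly L}) : {poly F} :=
  \poly_(i < size P) odflt 0 [pick a : F | a%:A == P`_i].

Definition m_poly (F : finFieldType) (L : fieldExtType F) (n t : nat) (z : L)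
  (alpha : nat -> nat) (j : nat) : {poly F} :=
  descend (coset_poly z (cycl_coset #|F| (t * n) (1 + t * alpha j))).

Definition I_code (F : finFieldType) (L : fieldExtType F) (n t : nat) (lam : F)
  (z : L) (alpha : nat -> nat) (j : nat) : {set 'rV[F]_n} :=
  gen_ideal n lam (polyR n lam %/ m_poly n t z alpha j).

Definition d_dim (q n t : nat) (alpha : nat -> nat) (j : nat) : nat :=
  size (cycl_coset q (t * n) (1 + t * alpha j)).

Definition norbits (T : finType) (f : T -> T) (X : {set T}) : nat :=
  #|[set [set y | fconnect f x y] | x in X]|.

Definition C_beta (F : finFieldType) (L : fieldExtType F) (n t : nat) (lam : F)
  (z : L) (alpha : nat -> nat) (l : nat) (beta : nat -> nat) : {set 'rV[F]_n} :=
  [set \sum_(i < l) f i | f : {ffun 'I_l -> 'rV[F]_n}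
     & [forall i : 'I_l, f i \in I_code n t lam z alpha (beta i) :\ 0]].

(* Main.v *)
Require Import Defs.
From HB Require Import structures.
From mathcomp Require Import all_boot all_order all_algebra all_field.
From mathcomp Require Import cyclic zify.
Import GRing.Theory.
Set Warnings "-notation-overridden,-ambiguous-paths,-redundant-canonical-projection".

Lemma totient_le m : totient m <= m.
Proof.
rewrite totient_count_coprime.
apply: leq_trans (_ : \sum_(0 <= d < m) 1 <= m).
  by apply: leq_sum => i _; case: (coprime _ _).
by rewrite sum_nat_const_nat muln1 subn0.
Qed.

Lemma mem_coset q m r h :
  (h \in cycl_coset q m r) = [exists e : 'I_m, h == r * q ^ e %% m].
Proof.
rewrite /cycl_coset mem_undup; apply/mapP/existsP => [[e]|[e /eqP ->]].
  rewrite mem_iota add0n => /andP[_ he] ->; by exists (Ordinal he).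
by exists (val e); rewrite // mem_iota add0n ltn_ord.
Qed.

Lemma coset_mem_any q m r E : 0 < m -> coprime q m ->
  r * q ^ E %% m \in cycl_coset q m r.
Proof.
move=> m0 cqm; set T := totient m.
have T0 : 0 < T by rewrite totient_gt0.
have hE : q ^ E = q ^ (E %% T) %[mod m].
  rewrite {1}(divn_eq E T) expnD (mulnC (E %/ T)) expnM -modnMml -modnXm.
  by rewrite (Euler_exp_totient cqm) modnXm modnMml exp1n mul1n.
rewrite mem_coset; apply/existsP.
have lt : E %% T < m by rewrite (leq_trans (ltn_pmod _ T0)) ?totient_le.
by exists (Ordinal lt); rewrite /= -modnMmr hE modnMmr.
Qed.

Lemma coset_lt q m r h : 0 < m -> h \in cycl_coset q m r -> h < m.
Proof. by move=> m0; rewrite mem_coset => /existsP[e /eqP ->]; rewrite ltn_pmod. Qed.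

Lemma coset_dvd q m r h k : coprime m q -> h \in cycl_coset q m r ->
  (m %| h * k) = (m %| r * k).
Proof.
move=> cmq; rewrite mem_coset => /existsP[e /eqP ->].
rewrite /dvdn modnMml -[_ == 0]/(m %| _) mulnAC Gauss_dvdl //.
by rewrite coprimeXr.
Qed.

Lemma coset_shift q m r h : 0 < m -> coprime q m -> h \in cycl_coset q m r ->
  h * q %% m \in cycl_coset q m r.
Proof.
move=> m0 cqm hh; have := hh; rewrite mem_coset => /existsP[e /eqP ->].
by rewrite modnMml -mulnA -expnSr coset_mem_any.
Qed.

Lemma coset_r q m r : 0 < m -> coprime q m -> r %% m \in cycl_coset q m r.
Proof. by move=> m0 cqm; have := coset_mem_any q m r 0 m0 cqm; rewrite expn0 muln1. Qed.

Lemma Euler_pow q m k : coprime q m -> q ^ (k * totient m) = 1 %[mod m].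
Proof.
move=> cqm; rewrite mulnC expnM -modnXm (Euler_exp_totient cqm) modnXm exp1n //.
Qed.

Lemma coset_sub q m r1 r2 h : 0 < m -> coprime q m ->
  h \in cycl_coset q m r1 -> h \in cycl_coset q m r2 ->
  {subset cycl_coset q m r1 <= cycl_coset q m r2}.
Proof.
move=> m0 cqm; rewrite !mem_coset => /existsP[a /eqP ->] /existsP[b /eqP hb] x.
rewrite mem_coset => /existsP[e /eqP ->].
set T := totient m.
have T0 : 0 < T by rewrite totient_gt0.
have aT : a <= a * T by rewrite leq_pmulr.
have -> : r1 * q ^ e %% m = r1 * q ^ a * q ^ (e + a * T - a) %% m.
  rewrite -mulnA -expnD addnBA ?addKn; last by rewrite (leq_trans aT) ?leq_addl.
  by rewrite expnD mulnA -[in RHS]modnMmr (Euler_pow q m a cqm) modnMmr muln1.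
rewrite -modnMml hb modnMml -mulnA -expnD coset_mem_any //.
Qed.

Lemma coset_eq q m r1 r2 h : 0 < m -> coprime q m ->
  h \in cycl_coset q m r1 -> h \in cycl_coset q m r2 ->
  cycl_coset q m r1 =i cycl_coset q m r2.
Proof.
move=> m0 cqm h1 h2 x; apply/idP/idP; [exact: coset_sub h1 h2 x|exact: coset_sub h2 h1 x].
Qed.

Lemma coset_mod1 q m r t h : t %| m -> q %% t = 1 %% t -> r %% t = 1 %% t ->
  h \in cycl_coset q m r -> h %% t = 1 %% t.
Proof.
move=> tm qt rt; rewrite mem_coset => /existsP[e /eqP ->].
rewrite (modn_dvdm _ tm) -modnMml rt modnMml mul1n -modnXm qt modnXm exp1n //.
Qed.

Set Implicit Arguments.
Unset Strict Implicit.

Lemma norbits_mul (T : finType) (f : T -> T) (X : {set T}) k :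
  injective f -> (forall x, x \in X -> f x \in X) ->
  (forall x, x \in X -> order f x = k) -> norbits f X * k = #|X|.
Proof.
move=> injf fX oX.
have cl : forall x y, x \in X -> fconnect f x y -> y \in X.
  move=> x y xX /iter_findex <-; elim: (findex f x y) => //= i IH; exact: fX.
have eqQ : [set [set y | fconnect f x y] | x in X] = equivalence_partition (fconnect f) X.
  rewrite /equivalence_partition; apply: eq_in_imset => x xX.
  apply/setP => y; rewrite !inE; apply/idP/andP => [h|[]//]; split=> //; exact: cl h.
have eqv : {in X & &, equivalence_rel (fconnect f)}.
  move=> x y w _ _ _; split; first exact: connect0.
  move=> hxy; apply/idP/idP => h.
    by apply: connect_trans h; rewrite fconnect_sym.
  exact: connect_trans hxy h.
have part := equivalence_partitionP eqv.
rewrite /norbits eqQ (card_partition part) -sum_nat_const.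
apply: eq_bigr => A; rewrite /equivalence_partition => /imsetP[x xX ->].
rewrite -(oX x xX) /order; apply: eq_card => y; rewrite !inE.
by apply/idP/andP => [h|[]//]; split=> //; exact: cl h.
Qed.

Lemma order_eq (T : finType) (f : T -> T) x k0 : injective f -> 0 < k0 ->
  (forall k, (iter k f x == x) = (k0 %| k)) -> order f x = k0.
Proof.
move=> injf k0p hk; apply/eqP; rewrite eqn_leq; apply/andP; split; last first.
  by apply: dvdn_leq; [exact: order_gt0 | rewrite -hk iter_order].
rewrite leqNgt; apply/negP => lt.
have := findex_iter lt; have /eqP -> : iter k0 f x == x by rewrite hk.
by rewrite findex0 => e; move: k0p; rewrite -e.
Qed.

Lemma dvd_gcd_div m G k : 0 < m ->
  (m %| G * k) = ((m %/ gcdn m G) %| k).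
Proof.
move=> m0; set g := gcdn m G.
have g0 : 0 < g by rewrite gcdn_gt0 m0.
have em : m = m %/ g * g by rewrite divnK // dvdn_gcdl.
have eG : G = G %/ g * g by rewrite divnK // dvdn_gcdr.
have cop : coprime (m %/ g) (G %/ g).
  by rewrite /coprime -(eqn_pmul2r g0) muln_gcdl -em -eG mul1n.
rewrite {1}em {1}eG mulnAC dvdn_pmul2r // mulnC Gauss_dvdl //.
Qed.

Lemma biggcd_mulr l (F : nat -> nat) k :
  \big[gcdn/0]_(i < l) (F i * k) = (\big[gcdn/0]_(i < l) F i) * k.
Proof.
elim/big_rec2: _ => [|i y1 y2 _ ->]; first by rewrite mul0n.
by rewrite muln_gcdl.
Qed.

Lemma all_dvd_gcd l (F : nat -> nat) m k :
  [forall i : 'I_l, m %| F i * k] = (m %| (\big[gcdn/0]_(i < l) F i) * k).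
Proof.
rewrite -biggcd_mulr; apply/forallP/dvdn_biggcdP => h i //; exact: h.
Qed.

Unset Implicit Arguments.
Set Strict Implicit.
Local Open Scope ring_scope.


Lemma coef_poly_of {F : finFieldType} {n : nat} (c : 'rV[F]_n) (i : 'I_n) :
  (poly_of c)`_i = c 0 i.
Proof.
rewrite /poly_of coef_sum (bigD1 i) //= big1 => [|j hj]; last first.
  rewrite coefZ coefXn; case: eqP => [ej|]; last by rewrite mulr0.
  by move/eqP: hj; case; apply/val_inj.
by rewrite coefZ coefXn eqxx mulr1 addr0.
Qed.

Lemma coef_poly_of_ge (F : finFieldType) (n : nat) (c : 'rV[F]_n) (i : nat) :
  (n <= i)%N -> (poly_of c)`_i = 0.
Proof.
move=> hi; rewrite /poly_of coef_sum big1 // => j _; rewrite coefZ coefXn.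
case: eqP => [ej|]; last by rewrite mulr0.
by move: (ltn_ord j); rewrite -ej ltnNge hi.
Qed.

Lemma size_poly_of (F : finFieldType) (n : nat) (c : 'rV[F]_n) : (size (poly_of c) <= n)%N.
Proof. by apply/leq_sizeP => i hi; rewrite coef_poly_of_ge. Qed.

Lemma poly_of_inj (F : finFieldType) (n : nat) : injective (@poly_of F n).
Proof.
move=> c d e; apply/matrixP => i j; rewrite [i]ord1.
by have := congr1 (fun p : {poly F} => p`_j) e; rewrite /= !coef_poly_of.
Qed.

Lemma poly_ofD (F : finFieldType) (n : nat) (c d : 'rV[F]_n) :
  poly_of (c + d) = poly_of c + poly_of d.
Proof. by rewrite /poly_of -big_split; apply: eq_bigr => i _; rewrite mxE scalerDl. Qed.

Lemma poly_ofN (F : finFieldType) (n : nat) (c : 'rV[F]_n) :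
  poly_of (- c) = - poly_of c.
Proof. by rewrite /poly_of -sumrN; apply: eq_bigr => i _; rewrite mxE scaleNr. Qed.

Lemma poly_of0 (F : finFieldType) (n : nat) : poly_of (0 : 'rV[F]_n) = 0.
Proof. by rewrite /poly_of big1 // => i _; rewrite mxE scale0r. Qed.

Lemma poly_ofB (F : finFieldType) (n : nat) (c d : 'rV[F]_n) :
  poly_of (c - d) = poly_of c - poly_of d.
Proof. by rewrite poly_ofD poly_ofN. Qed.

Lemma poly_of_sum (F : finFieldType) (n l : nat) (f : 'I_l -> 'rV[F]_n) :
  poly_of (\sum_(i < l) f i) = \sum_(i < l) poly_of (f i).
Proof.
elim/big_rec2: _ ; first exact: poly_of0.
by move=> i y1 y2 _ <-; rewrite poly_ofD.
Qed.

Lemma size_polyR (F : finFieldType) (n : nat) (lam : F) : (0 < n)%N ->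
  size (polyR n lam) = n.+1.
Proof. by move=> n0; rewrite /polyR size_XnsubC. Qed.

Lemma polyR_neq0 (F : finFieldType) (n : nat) (lam : F) : (0 < n)%N -> polyR n lam != 0.
Proof. by move=> n0; rewrite -size_poly_eq0 size_polyR. Qed.

Lemma poly_of_vec (F : finFieldType) (n : nat) (lam : F) (p : {poly F}) : (0 < n)%N ->
  poly_of (vec_of n lam p) = p %% polyR n lam.
Proof.
move=> n0; apply/polyP => i; case: (ltnP i n) => hi.
  by have := coef_poly_of (vec_of n lam p) (Ordinal hi); rewrite /= => ->; rewrite mxE.
have := ltn_modp p (polyR n lam); rewrite polyR_neq0 // size_polyR // ltnS => hs.
by rewrite coef_poly_of_ge // nth_default // (leq_trans hs).
Qed.

Lemma vec_of_poly (F : finFieldType) (n : nat) (lam : F) (c : 'rV[F]_n) : (0 < n)%N ->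
  vec_of n lam (poly_of c) = c.
Proof.
move=> n0; apply: poly_of_inj; rewrite poly_of_vec // modp_small //.
by rewrite size_polyR // ltnS size_poly_of.
Qed.

Lemma vec_of_eq (F : finFieldType) (n : nat) (lam : F) (p r : {poly F}) :
  p %% polyR n lam = r %% polyR n lam -> vec_of n lam p = vec_of n lam r.
Proof. by move=> e; apply/matrixP => i j; rewrite !mxE e. Qed.

Lemma vec_ofD (F : finFieldType) (n : nat) (lam : F) (p r : {poly F}) :
  vec_of n lam (p + r) = vec_of n lam p + vec_of n lam r.
Proof. by apply/matrixP => i j; rewrite !mxE modpD coefD. Qed.

Lemma vec_of0 (F : finFieldType) (n : nat) (lam : F) : vec_of n lam 0 = 0.
Proof. by apply/matrixP => i j; rewrite !mxE mod0p coef0. Qed.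

Lemma iter_rho (F : finFieldType) (n : nat) (lam : F) (c : 'rV[F]_n) k : (0 < n)%N ->
  iter k (rho lam) c = vec_of n lam ('X^k * poly_of c).
Proof.
move=> n0; elim: k => [|k IH]; first by rewrite mul1r vec_of_poly.
rewrite iterS IH /rho poly_of_vec //; apply: vec_of_eq.
by rewrite modp_mul exprS mulrA.
Qed.

Lemma rhoD (F : finFieldType) (n : nat) (lam : F) (c d : 'rV[F]_n) :
  rho lam (c + d) = rho lam c + rho lam d.
Proof. by rewrite /rho poly_ofD mulrDr vec_ofD. Qed.

Lemma rho0 (F : finFieldType) (n : nat) (lam : F) : rho lam (0 : 'rV[F]_n) = 0.
Proof. by rewrite /rho poly_of0 mulr0 vec_of0. Qed.

Lemma rho_sum (F : finFieldType) (n l : nat) (lam : F) (f : 'I_l -> 'rV[F]_n) :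
  rho lam (\sum_(i < l) f i) = \sum_(i < l) rho lam (f i).
Proof.
elim/big_rec2: _ ; first exact: rho0.
by move=> i y1 y2 _ <-; rewrite rhoD.
Qed.

Lemma poly_of_row (F : finFieldType) (d : nat) (p : {poly F}) :
  (size p <= d)%N -> poly_of (\row_(i < d) p`_i) = p.
Proof.
move=> hp; apply/polyP => i; case: (ltnP i d) => hi.
  by have := coef_poly_of (\row_(i < d) p`_i) (Ordinal hi); rewrite /= => ->; rewrite mxE.
by rewrite coef_poly_of_ge // nth_default // (leq_trans hp).
Qed.

Definition pL {F : finFieldType} (L : fieldExtType F) (p : {poly F}) : {poly L} :=
  map_poly (in_alg L) p.

Definition ev {F : finFieldType} (L : fieldExtType F) {n : nat} (c : 'rV[F]_n) (x : L) : L :=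
  (pL L (poly_of c)).[x].

Lemma pL_polyR (F : finFieldType) (L : fieldExtType F) n (lam : F) :
  pL L (polyR n lam) = 'X^n - (lam%:A)%:P.
Proof. by rewrite /pL /polyR rmorphB /= map_polyXn map_polyC. Qed.

Lemma horner_mod_root (F : finFieldType) (L : fieldExtType F) (p P : {poly F}) (x : L) :
  (pL L P).[x] = 0 -> (pL L (p %% P)).[x] = (pL L p).[x].
Proof.
move=> r; rewrite {2}(divp_eq p P) /pL rmorphD rmorphM /= hornerD hornerM.
by rewrite -/(pL L P) r mulr0 add0r.
Qed.

Lemma ev_vec (F : finFieldType) (L : fieldExtType F) n (lam : F) (p : {poly F}) (x : L) :
  (0 < n)%N -> (pL L (polyR n lam)).[x] = 0 -> ev L (vec_of n lam p) x = (pL L p).[x].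
Proof. by move=> n0 r; rewrite /ev poly_of_vec // horner_mod_root. Qed.

Lemma ev_iter_rho (F : finFieldType) (L : fieldExtType F) n (lam : F) (c : 'rV[F]_n) k (x : L) :
  (0 < n)%N -> (pL L (polyR n lam)).[x] = 0 ->
  ev L (iter k (rho lam) c) x = x ^+ k * ev L c x.
Proof.
move=> n0 r; rewrite iter_rho // ev_vec // /pL rmorphM /= map_polyXn hornerM hornerXn.
by [].
Qed.

Lemma evD (F : finFieldType) (L : fieldExtType F) n (c d : 'rV[F]_n) (x : L) :
  ev L (c + d) x = ev L c x + ev L d x.
Proof. by rewrite /ev poly_ofD /pL rmorphD hornerD. Qed.

Lemma evB (F : finFieldType) (L : fieldExtType F) n (c d : 'rV[F]_n) (x : L) :
  ev L (c - d) x = ev L c x - ev L d x.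
Proof. by rewrite /ev poly_ofB /pL rmorphB hornerD hornerN. Qed.

Lemma ev0 (F : finFieldType) (L : fieldExtType F) n (x : L) : ev L (0 : 'rV[F]_n) x = 0.
Proof. by rewrite /ev poly_of0 /pL rmorph0 horner0. Qed.

Lemma ev_sum (F : finFieldType) (L : fieldExtType F) n l (f : 'I_l -> 'rV[F]_n) (x : L) :
  ev L (\sum_(i < l) f i) x = \sum_(i < l) ev L (f i) x.
Proof.
elim/big_rec2: _ ; first exact: ev0.
by move=> i y1 y2 _ <-; rewrite evD.
Qed.

Lemma ev_eq0 (F : finFieldType) (L : fieldExtType F) n (c : 'rV[F]_n) (rs : seq L) :
  uniq rs -> size rs = n -> (forall x, x \in rs -> ev L c x = 0) -> c = 0.
Proof.
move=> urs srs h.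
have : pL L (poly_of c) == 0.
  have [//|nz] := eqVneq (pL L (poly_of c)) 0; exfalso.
  have hr : all (root (pL L (poly_of c))) rs by apply/allP => x /h hx; apply/eqP; exact: hx.
  have := max_poly_roots nz hr urs.
  by rewrite srs size_map_poly ltnNge size_poly_of.
rewrite /pL map_poly_eq0 -(poly_of0 F n) => /eqP; exact: poly_of_inj.
Qed.

Set Implicit Arguments.
Unset Strict Implicit.

Definition frobq {F : finFieldType} (L : fieldExtType F) (x : L) : L := x ^+ #|F|.
Arguments frobq {F} L x.

Lemma frobq_zmod (F : finFieldType) (L : fieldExtType F) : zmod_morphism (frobq L).
Proof.
rewrite /frobq => x y; rewrite ?exprMn ?expr1n //.
have [p _ pcharFp] := finPcharP F; rewrite (card_pprimeChar pcharFp).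
elim: (logn _ _) => // n IHn; rewrite expnSr !exprM {}IHn.
by rewrite -(pchar_lalg L) in pcharFp; rewrite -pFrobenius_autE rmorphB.
Qed.

Lemma frobq_monoid (F : finFieldType) (L : fieldExtType F) : monoid_morphism (frobq L).
Proof. by rewrite /frobq; split=> [|x y]; rewrite ?exprMn ?expr1n. Qed.

HB.instance Definition _ (F : finFieldType) (L : fieldExtType F) :=
  GRing.isZmodMorphism.Build L L (frobq L) (@frobq_zmod F L).
HB.instance Definition _ (F : finFieldType) (L : fieldExtType F) :=
  GRing.isMonoidMorphism.Build L L (frobq L) (@frobq_monoid F L).

Lemma frob_fixed (F : finFieldType) (L : fieldExtType F) (x : L) :
  x ^+ #|F| = x -> exists a : F, x = a%:A.
Proof.
move=> xFx.
pose q := map_poly (in_alg L) ('X^#|F| - 'X).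
have: root q x.
  rewrite /q rmorphB /= map_polyXn map_polyX.
  by rewrite rootE !(hornerE, hornerXn) xFx subrr.
have{q} ->: q = \prod_(z <- [seq b%:A | b : F]) ('X - z%:P).
  rewrite /q finField_genPoly rmorph_prod big_image /=.
  by apply: eq_bigr => b _; rewrite rmorphB /= map_polyX map_polyC.
by rewrite root_prod_XsubC => /mapP[a]; exists a.
Qed.

Lemma z_mod (F : finFieldType) (L : fieldExtType F) (z : L) m h :
  m.-primitive_root z -> z ^+ (h %% m) = z ^+ h.
Proof. by move=> pz; rewrite expr_mod // prim_expr_order. Qed.

Lemma z_inj (F : finFieldType) (L : fieldExtType F) (z : L) m h h' :
  m.-primitive_root z -> (h < m)%N -> (h' < m)%N -> z ^+ h = z ^+ h' -> h = h'.
Proof.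
move=> pz hm hm' /eqP; rewrite (eq_prim_root_expr pz) => /eqP.
by rewrite !modn_small.
Qed.

Lemma coset_poly_frob (F : finFieldType) (L : fieldExtType F) (z : L) m r :
  (0 < m)%N -> m.-primitive_root z -> coprime #|F| m ->
  map_poly (frobq L) (coset_poly z (cycl_coset #|F| m r)) =
  coset_poly z (cycl_coset #|F| m r).
Proof.
move=> m0 pz cqm; set C := cycl_coset #|F| m r.
rewrite /coset_poly rmorph_prod /=.
have e1 : forall h, map_poly (frobq L) ('X - (z ^+ h)%:P) = 'X - (z ^+ (h * #|F| %% m))%:P.
  move=> h; rewrite rmorphB /= map_polyX map_polyC /= /frobq -exprM z_mod //.
rewrite (eq_bigr _ (fun h _ => e1 h)).
rewrite -(big_map (fun h => (h * #|F| %% m)%N) xpredT (fun h => 'X - (z ^+ h)%:P)).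
have u1 : uniq [seq (h * #|F| %% m)%N | h <- C].
  rewrite map_inj_in_uniq ?undup_uniq // => h h' hC h'C /= e.
  apply: (z_inj pz); [exact: coset_lt hC|exact: coset_lt h'C|].
  apply: (@fmorph_inj _ _ (frobq L)).
  by rewrite /= /frobq -!exprM -(z_mod _ pz) e z_mod.
have sub : {subset [seq (h * #|F| %% m)%N | h <- C] <= C}.
  by move=> x /mapP[h hC ->]; apply: coset_shift.
apply: perm_big; apply: uniq_perm => //; first exact: undup_uniq.
by case: (uniq_min_size u1 sub _) => //; rewrite size_map.
Qed.

Lemma coset_poly_coefF (F : finFieldType) (L : fieldExtType F) (z : L) m r :
  (0 < m)%N -> m.-primitive_root z -> coprime #|F| m ->
  forall i, exists a : F, (coset_poly z (cycl_coset #|F| m r))`_i = a%:A.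
Proof.
move=> m0 pz cqm i.
have := congr1 (fun p : {poly L} => p`_i) (coset_poly_frob r m0 pz cqm).
by rewrite /= coef_map /= /frobq => /frob_fixed.
Qed.

Lemma descend_map (F : finFieldType) (L : fieldExtType F) (P : {poly L}) :
  (forall i, exists a : F, P`_i = a%:A) -> pL L (descend P) = P.
Proof.
move=> hP; apply/polyP => i; rewrite /pL coef_map /= /descend coef_poly.
case: ifP => hi.
  case: pickP => [a /eqP -> //|none].
  by have [a ea] := hP i; have := none a; rewrite ea eqxx.
rewrite nth_default; last by rewrite leqNgt hi.
by rewrite /= scale0r.
Qed.

Lemma m_poly_map (F : finFieldType) (L : fieldExtType F) (n t : nat) (z : L) alpha j :
  (0 < t * n)%N -> (t * n).-primitive_root z -> coprime #|F| (t * n) ->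
  pL L (m_poly n t z alpha j) = coset_poly z (cycl_coset #|F| (t * n) (1 + t * alpha j)).
Proof. by move=> m0 pz cqm; apply: descend_map; apply: coset_poly_coefF. Qed.

Lemma root_z (F : finFieldType) (L : fieldExtType F) (n t : nat) (lam : F) (z : L) x :
  t.-primitive_root lam -> z ^+ n = lam%:A -> (x %% t = 1 %% t)%N ->
  (pL L (polyR n lam)).[z ^+ x] = 0.
Proof.
move=> pl zn hx; rewrite pL_polyR !hornerE -exprM mulnC exprM zn.
rewrite -!in_algE -rmorphXn -(expr_mod _ (prim_expr_order pl)) hx.
by rewrite (expr_mod _ (prim_expr_order pl)) expr1 subrr.
Qed.

Definition hyps (F : finFieldType) (L : fieldExtType F) (n t : nat) (lam : F) (z : L) :=
  [/\ (0 < n)%N, coprime n #|F|, t.-primitive_root lam, (t * n).-primitive_root z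
    & z ^+ n = lam%:A].

Lemma hyps_t0 F L n t lam z : @hyps F L n t lam z -> (0 < t)%N.
Proof. by case=> _ _ pl _ _; exact: prim_order_gt0 pl. Qed.

Lemma hyps_m0 F L n t lam z : @hyps F L n t lam z -> (0 < t * n)%N.
Proof. by move=> H; case: (H) => n0 *; rewrite muln_gt0 n0 (hyps_t0 H). Qed.

Lemma hyps_qt F L n t lam z : @hyps F L n t lam z -> (#|F| %% t = 1 %% t)%N.
Proof.
case=> _ _ pl _ _.
have q0 : (0 < #|F|)%N by apply/card_gt0P; exists 0.
have l0 : lam != 0.
  apply/eqP => l0; have := prim_expr_order pl; rewrite l0 expr0n.
  by rewrite eqn0Ngt (prim_order_gt0 pl) /= => /eqP; rewrite eq_sym oner_eq0.
have : lam ^+ #|F|.-1 = 1.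
  apply: (mulfI l0); rewrite -exprS prednK // expf_card mulr1 //.
move/eqP; rewrite -(prim_order_dvd pl) => /dvdnP[k hk].
by rewrite -(prednK q0) hk -addn1 modnMDl.
Qed.

Lemma hyps_cqm F L n t lam z : @hyps F L n t lam z -> coprime #|F| (t * n).
Proof.
move=> H; case: (H) => _ cnq _ _ _.
rewrite coprime_sym coprimeMl cnq andbT -coprime_modr (hyps_qt H).
by rewrite coprime_modr coprimen1.
Qed.

Lemma rt t a : ((1 + t * a) %% t = 1 %% t)%N.
Proof. by rewrite addnC mulnC modnMDl. Qed.

Lemma coset_roots F L n t lam z (H : @hyps F L n t lam z) r h :
  ((r %% t) = 1 %% t)%N ->
  h \in cycl_coset #|F| (t * n) r -> (pL L (polyR n lam)).[z ^+ h] = 0.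
Proof.
move=> hr hC; case: (H) => _ _ pl _ zn; apply: root_z pl zn _.
exact: coset_mod1 (dvdn_mulr _ (dvdnn t)) (hyps_qt H) hr hC.
Qed.

Lemma coset_uniq F L n t lam z (H : @hyps F L n t lam z) r :
  uniq [seq z ^+ h | h <- cycl_coset #|F| (t * n) r].
Proof.
case: (H) => _ _ _ pz _.
rewrite map_inj_in_uniq ?undup_uniq // => h h' hC h'C.
by apply: (z_inj pz); apply: coset_lt hC || apply: coset_lt h'C; exact: (hyps_m0 H).
Qed.

Lemma M_dvd F L n t lam z (H : @hyps F L n t lam z) alpha j :
  m_poly n t z alpha j %| polyR n lam.
Proof.
case: (H) => _ _ _ pz _.
rewrite -(dvdp_map (in_alg L)) -/(pL L _) -/(pL L _).
rewrite m_poly_map ?(hyps_m0 H) ?(hyps_cqm H) //.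
set C := cycl_coset _ _ _.
have [||q ->] := @uniq_roots_prod_XsubC _ (pL L (polyR n lam)) [seq z ^+ h | h <- C].
- apply/allP => x /mapP[h hC ->]; apply/eqP; apply: (coset_roots H _ hC); exact: rt.
- by rewrite uniq_rootsE (coset_uniq H).
by rewrite /coset_poly big_map dvdp_mull.
Qed.

Lemma size_M F L n t lam z (H : @hyps F L n t lam z) alpha j :
  size (m_poly n t z alpha j) = (d_dim #|F| n t alpha j).+1.
Proof.
case: (H) => _ _ _ pz _.
rewrite -(size_map_poly (in_alg L)) -/(pL L _).
by rewrite m_poly_map ?(hyps_m0 H) ?(hyps_cqm H) // /coset_poly size_prod_XsubC.
Qed.

Lemma Mhat_nz F L n t lam z (H : @hyps F L n t lam z) alpha j h :
  (h < t * n)%N -> h \notin cycl_coset #|F| (t * n) (1 + t * alpha j) ->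
  (pL L (m_poly n t z alpha j)).[z ^+ h] != 0.
Proof.
case: (H) => _ _ _ pz _ hm hC.
rewrite m_poly_map ?(hyps_m0 H) ?(hyps_cqm H) // /coset_poly horner_prod.
rewrite prodf_seq_neq0; apply/allP => h' h'C /=; rewrite hornerXsubC subr_eq0; apply/eqP => e.
have e' := z_inj pz hm (coset_lt _ _ _ _ (hyps_m0 H) h'C) e.
by move: hC; rewrite e' h'C.
Qed.

Lemma GM F L n t lam z (H : @hyps F L n t lam z) alpha j :
  (polyR n lam %/ m_poly n t z alpha j) * m_poly n t z alpha j = polyR n lam.
Proof. exact: divpK (M_dvd H alpha j). Qed.

Lemma I_vanish F L n t lam z (H : @hyps F L n t lam z) alpha j c h :
  c \in I_code n t lam z alpha j -> (h < t * n)%N -> (h %% t = 1 %% t)%N ->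
  h \notin cycl_coset #|F| (t * n) (1 + t * alpha j) -> ev L c (z ^+ h) = 0.
Proof.
case: (H) => n0 _ pl _ zn.
case/imsetP => a _ -> hm ht hC.
have r := root_z pl zn ht.
rewrite ev_vec // /pL rmorphM hornerM -/(pL L _) -/(pL L _).
have : (pL L (polyR n lam %/ m_poly n t z alpha j)).[z ^+ h] *
       (pL L (m_poly n t z alpha j)).[z ^+ h] = 0.
  by rewrite -hornerM /pL -rmorphM -/(pL L _) (GM H) r.
move/eqP; rewrite mulf_eq0 => /orP[/eqP -> | e]; first by rewrite mul0r.
by move: (Mhat_nz H hm hC); rewrite e.
Qed.

Lemma I_rho F L n t lam z (H : @hyps F L n t lam z) alpha j c :
  c \in I_code n t lam z alpha j -> rho lam c \in I_code n t lam z alpha j.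
Proof.
case: (H) => n0 _ _ _ _.
case/imsetP => a _ ->; apply/imsetP; exists (vec_of n lam ('X * poly_of a)) => //.
rewrite /rho !poly_of_vec //; apply: vec_of_eq; rewrite !modp_mul.
by rewrite mulrCA.
Qed.

Lemma I_zero F L n t lam z (H : @hyps F L n t lam z) alpha j :
  (0 : 'rV[F]_n) \in I_code n t lam z alpha j.
Proof.
apply/imsetP; exists 0 => //; by rewrite poly_of0 mulr0 vec_of0.
Qed.

Lemma card_I F L n t lam z (H : @hyps F L n t lam z) alpha j :
  #|I_code n t lam z alpha j| = (#|F| ^ d_dim #|F| n t alpha j)%N.
Proof.
case: (H) => n0 _ _ _ _.
set d := d_dim #|F| n t alpha j.
set M := m_poly n t z alpha j.
pose G : {poly F} := polyR n lam %/ M.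
have sM : size M = d.+1 by exact: (size_M H).
have M0 : M != 0 by rewrite -size_poly_eq0 sM.
have GM' : G * M = polyR n lam by exact: (GM H).
have P0 := polyR_neq0 F n lam n0.
have dn : (d <= n)%N.
  have := dvdp_leq P0 (M_dvd H alpha j).
  by rewrite -/M sM size_polyR.
have G0 : G != 0 by apply: contra P0 => /eqP G0; rewrite -GM' G0 mul0r.
have sG : size G = (n - d).+1.
  rewrite size_divp // size_polyR // sM /=; by rewrite subSn.
pose Psi (b : 'rV[F]_d) := vec_of n lam (G * poly_of b).
have Pinj : injective Psi.
  move=> b b' e; apply: poly_of_inj.
  have small : forall b : 'rV[F]_d, (size (G * poly_of b)%R < size (polyR n lam))%N.
    move=> b0; rewrite size_polyR //; apply: leq_ltn_trans (size_polyMleq _ _) _.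
    rewrite sG; have := @size_poly_of F d b0 => hb.
    case: (size (poly_of b0)) hb => [|s] hs /=; first by rewrite addn0 ltnS leq_subr.
    by rewrite addnS /= ltnS; lia.
  have := congr1 (@poly_of F n) e; rewrite /Psi !poly_of_vec // !modp_small //.
  by move/(mulfI G0).
have -> : I_code n t lam z alpha j = Psi @: setT.
  apply/setP => c; apply/imsetP/imsetP => [[a _ ->]|[b _ ->]].
    set r := poly_of a %% M.
    have sr : (size r <= d)%N by rewrite -ltnS -sM ltn_modp.
    exists (\row_(i < d) r`_i) => //; rewrite /Psi poly_of_row //.
    apply: vec_of_eq; rewrite {1}(divp_eq (poly_of a) M) mulrDr mulrCA GM' modpD.
    by rewrite modp_mull add0r.
  exists (vec_of n lam (poly_of b)) => //; rewrite /Psi poly_of_vec //.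
  by apply: vec_of_eq; rewrite modp_mul.
by rewrite card_imset // cardsT card_mx mul1n.
Qed.

Lemma roots_uniq F L n t lam z (H : @hyps F L n t lam z) :
  uniq [seq z ^+ (1 + t * i) | i <- iota 0 n].
Proof.
case: (H) => n0 _ _ pz _; have t0 := hyps_t0 H.
rewrite map_inj_in_uniq ?iota_uniq // => i j; rewrite !mem_iota !add0n => hi hj /eqP.
rewrite (eq_prim_root_expr pz) eqn_modDl -!muln_modr eqn_pmul2l //.
by rewrite !modn_small // => /eqP.
Qed.

Lemma ev_zero_of F L n t lam z (H : @hyps F L n t lam z) (c : 'rV[F]_n) :
  (forall i, (i < n)%N -> ev L c (z ^+ (1 + t * i)) = 0) -> c = 0.
Proof.
move=> h; apply: (@ev_eq0 F L n c _ (roots_uniq H)); first by rewrite size_map size_iota.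
by move=> x /mapP[i]; rewrite mem_iota add0n => /andP[_ hi] ->; exact: h.
Qed.

Lemma xroot F L n t lam z (H : @hyps F L n t lam z) i :
  (pL L (polyR n lam)).[z ^+ (1 + t * i)] = 0.
Proof. by case: (H) => _ _ pl _ zn; apply: root_z pl zn (rt _ _). Qed.

Lemma vanish F L n t lam z (H : @hyps F L n t lam z) alpha j c i :
  c \in I_code n t lam z alpha j ->
  ((1 + t * i) %% (t * n))%N \notin cycl_coset #|F| (t * n) (1 + t * alpha j) ->
  ev L c (z ^+ (1 + t * i)) = 0.
Proof.
case: (H) => _ _ _ pz _ cI hC.
rewrite -(z_mod _ pz); apply: (I_vanish H cI) => //.
  by rewrite ltn_pmod // (hyps_m0 H).
by rewrite (modn_dvdm _ (dvdn_mulr _ (dvdnn t))) rt.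
Qed.

Lemma z_neq0 F L n t lam z (H : @hyps F L n t lam z) k : z ^+ k != 0.
Proof.
case: (H) => _ _ _ pz _; rewrite expf_neq0 //; apply/eqP => z0.
have := prim_expr_order pz; rewrite z0 expr0n eqn0Ngt (hyps_m0 H) /=.
by move/eqP; rewrite eq_sym oner_eq0.
Qed.

Lemma rho_inj F L n t lam z (H : @hyps F L n t lam z) : injective (@rho F n lam).
Proof.
case: (H) => n0 _ _ _ _ c d e; apply/eqP; rewrite -subr_eq0; apply/eqP.
apply: (ev_zero_of H) => i hi; rewrite evB; apply/eqP; rewrite subr_eq0; apply/eqP.
have e1 := @ev_iter_rho F L n lam c 1 _ n0 (xroot H i).
have e2 := @ev_iter_rho F L n lam d 1 _ n0 (xroot H i).
rewrite /= e e2 !expr1 in e1.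
by apply: (mulfI (z_neq0 H (1 + t * i))); rewrite e1.
Qed.

Lemma ev_sum_in F L n t lam z (H : @hyps F L n t lam z) alpha l (beta : nat -> nat)
  (Hdisj : forall (i i' : 'I_l) h, h \in cycl_coset #|F| (t * n) (1 + t * alpha (beta i)) ->
     h \in cycl_coset #|F| (t * n) (1 + t * alpha (beta i')) -> i = i')
  (f : 'I_l -> 'rV[F]_n) (hf : forall i, f i \in I_code n t lam z alpha (beta i)) (i : 'I_l) i0 :
  ((1 + t * i0) %% (t * n))%N \in cycl_coset #|F| (t * n) (1 + t * alpha (beta i)) ->
  ev L (\sum_(i' < l) f i') (z ^+ (1 + t * i0)) = ev L (f i) (z ^+ (1 + t * i0)).
Proof.
move=> hC; rewrite ev_sum (bigD1 i) //= big1 ?addr0 // => i' ne.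
apply: (vanish H (hf i')); apply/negP => hC'.
by move: ne; rewrite (Hdisj _ _ _ hC hC') eqxx.
Qed.

Lemma exists_nz F L n t lam z (H : @hyps F L n t lam z) (c : 'rV[F]_n) :
  c != 0 -> exists2 i0, (i0 < n)%N & ev L c (z ^+ (1 + t * i0)) != 0.
Proof.
move=> c0; case: (pickP (fun i0 : 'I_n => ev L c (z ^+ (1 + t * i0)) != 0)) => [i0 hne|none].
  by exists i0.
have c00 : c = 0.
  by apply: (ev_zero_of H) => i hi; have := none (Ordinal hi); rewrite /= => /negbFE /eqP.
by rewrite c00 eqxx in c0.
Qed.


Lemma fixed_iff F L n t lam z (H : @hyps F L n t lam z) alpha l (beta : nat -> nat)
  (Hdisj : forall (i i' : 'I_l) h, h \in cycl_coset #|F| (t * n) (1 + t * alpha (beta i)) ->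
     h \in cycl_coset #|F| (t * n) (1 + t * alpha (beta i')) -> i = i')
  (f : 'I_l -> 'rV[F]_n) (hf : forall i, f i \in I_code n t lam z alpha (beta i) :\ 0) k :
  (iter k (rho lam) (\sum_(i < l) f i) == \sum_(i < l) f i) =
  [forall i : 'I_l, (t * n) %| (1 + t * alpha (beta i)) * k]%N.
Proof.
have hfI : forall i, f i \in I_code n t lam z alpha (beta i).
  by move=> i; have := hf i; rewrite !inE => /andP[].
have hf0 : forall i, f i != 0.
  by move=> i; have := hf i; rewrite !inE => /andP[].
have cmq : coprime (t * n) #|F| by rewrite coprime_sym (hyps_cqm H).
case: (H) => n0 _ _ pz _.
set c := \sum_(i < l) f i.
apply/eqP/forallP => [hfix i|hall].
  have [i0 hi0 ne] := exists_nz H (hf0 i).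
  set h := ((1 + t * i0) %% (t * n))%N.
  have hC : h \in cycl_coset #|F| (t * n) (1 + t * alpha (beta i)).
    apply/negPn/negP => hC; move: ne; rewrite (vanish H (hfI i) hC) eqxx //.
  have ec := ev_sum_in H Hdisj hfI hC.
  have := congr1 (fun v => ev L v (z ^+ (1 + t * i0))) hfix.
  rewrite /= ev_iter_rho // ?(xroot H) // -/c ec -{2}[ev L (f i) _]mul1r.
  move/(mulIf ne); rewrite -(z_mod _ pz) -/h -exprM => /eqP.
  by rewrite -(prim_order_dvd pz) (coset_dvd _ _ _ _ _ cmq hC).
apply/eqP; rewrite -subr_eq0; apply/eqP; apply: (ev_zero_of H) => i0 hi0.
rewrite evB ev_iter_rho // ?(xroot H) // -{2}[ev L c _]mul1r -mulrBl.
rewrite /c ev_sum mulr_sumr big1 // => i _.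
case: (boolP (((1 + t * i0) %% (t * n))%N \in cycl_coset #|F| (t * n) (1 + t * alpha (beta i)))) => hC.
  have := hall i; rewrite -(coset_dvd _ _ _ _ _ cmq hC) (prim_order_dvd pz) exprM z_mod //.
  by move/eqP ->; rewrite subrr mul0r.
by rewrite (vanish H (hfI i) hC) mulr0.
Qed.

Lemma beta_mono (beta : nat -> nat) l :
  (forall i, (i.+1 < l)%N -> (beta i < beta i.+1)%N) ->
  forall i j, (i < j)%N -> (j < l)%N -> (beta i < beta j)%N.
Proof.
move=> hinc i j; elim: j => // j IH; rewrite ltnS leq_eqVlt => /orP[/eqP <-|lt] hl.
  exact: hinc.
exact: ltn_trans (IH lt (ltnW hl)) (hinc _ hl).
Qed.

Lemma Hdisj_of F L n t lam z (H : @hyps F L n t lam z) s alpha l (beta : nat -> nat) :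
  (forall j k, (j <= s)%N -> (k <= s)%N -> j != k ->
     ~ (cycl_coset #|F| (t * n) (1 + t * alpha j)
        =i cycl_coset #|F| (t * n) (1 + t * alpha k))) ->
  (forall i, (i.+1 < l)%N -> (beta i < beta i.+1)%N) ->
  (forall i, (i < l)%N -> (beta i <= s)%N) ->
  forall (i i' : 'I_l) h, h \in cycl_coset #|F| (t * n) (1 + t * alpha (beta i)) ->
     h \in cycl_coset #|F| (t * n) (1 + t * alpha (beta i')) -> i = i'.
Proof.
move=> hdist hinc hle i i' h h1 h2.
case: (eqVneq i i') => // ne; exfalso.
have bne : beta i != beta i'.
  case: (ltngtP i i') => [lt|lt|/val_inj e]; last by rewrite e eqxx in ne.
    by rewrite neq_ltn (beta_mono hinc lt (ltn_ord i')).
  by rewrite neq_ltn (beta_mono hinc lt (ltn_ord i)) orbT.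
apply: (hdist _ _ (hle _ (ltn_ord i)) (hle _ (ltn_ord i')) bne).
exact: coset_eq (hyps_m0 H) (hyps_cqm H) h1 h2.
Qed.

Lemma C_memP (F : finFieldType) (L : fieldExtType F) n t (lam : F) (z : L) alpha l (beta : nat -> nat) (c : 'rV[F]_n) :
  reflect (exists2 f : {ffun 'I_l -> 'rV[F]_n},
             (forall i, f i \in I_code n t lam z alpha (beta i) :\ 0) & c = \sum_(i < l) f i)
          (c \in C_beta n t lam z alpha l beta).
Proof.
apply: (iffP imsetP) => [[f hf ->]|[f hf ->]]; exists f => //.
  by move=> i; move: hf; rewrite inE => /forallP.
by rewrite inE; apply/forallP.
Qed.

Lemma C_closed F L n t lam z (H : @hyps F L n t lam z) alpha l (beta : nat -> nat) c :
  c \in C_beta n t lam z alpha l beta -> rho lam c \in C_beta n t lam z alpha l beta.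
Proof.
case/C_memP => f hf ->; apply/C_memP; exists [ffun i => rho lam (f i)].
  move=> i; rewrite ffunE; have := hf i; rewrite !inE => /andP[nz fI].
  rewrite (I_rho H fI) andbT; apply: contra nz => /eqP e.
  by apply/eqP; apply: (rho_inj H); rewrite e rho0.
by rewrite rho_sum; apply: eq_bigr => i _; rewrite ffunE.
Qed.

Lemma C_order F L n t lam z (H : @hyps F L n t lam z) alpha l (beta : nat -> nat)
  (Hdisj : forall (i i' : 'I_l) h, h \in cycl_coset #|F| (t * n) (1 + t * alpha (beta i)) ->
     h \in cycl_coset #|F| (t * n) (1 + t * alpha (beta i')) -> i = i') c :
  c \in C_beta n t lam z alpha l beta ->
  order (rho lam) c =
  ((t * n) %/ gcdn (t * n) (\big[gcdn/0]_(i < l) (1 + t * alpha (beta i))))%N.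
Proof.
have m0 := hyps_m0 H.
case/C_memP => f hf ->; apply: order_eq.
- exact: rho_inj H.
- by rewrite divn_gt0 ?gcdn_gt0 ?m0 // dvdn_leq // dvdn_gcdl.
move=> k; rewrite (fixed_iff H Hdisj hf).
by rewrite (@all_dvd_gcd l (fun i => 1 + t * alpha (beta i))) dvd_gcd_div.
Qed.

Lemma C_card F L n t lam z (H : @hyps F L n t lam z) alpha l (beta : nat -> nat)
  (Hdisj : forall (i i' : 'I_l) h, h \in cycl_coset #|F| (t * n) (1 + t * alpha (beta i)) ->
     h \in cycl_coset #|F| (t * n) (1 + t * alpha (beta i')) -> i = i') :
  #|C_beta n t lam z alpha l beta| =
  (\prod_(i < l) (#|F| ^ d_dim #|F| n t alpha (beta i) - 1))%N.
Proof.
rewrite /C_beta card_in_imset.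
  rewrite (eq_card (B := family (fun i : 'I_l => mem (I_code n t lam z alpha (beta i) :\ 0)))).
    rewrite card_family foldrE big_map big_enum /=; apply: eq_bigr => i _.
    have e := cardsD1 (0 : 'rV[F]_n) (I_code n t lam z alpha (beta i)).
    by rewrite (I_zero H) (card_I H) /= add1n in e; rewrite e subn1.
  by move=> f; rewrite !inE; apply/forallP/familyP.
move=> f g; rewrite !inE => /forallP hf /forallP hg e.
have hfI : forall i, f i \in I_code n t lam z alpha (beta i).
  by move=> i; have := hf i; rewrite !inE => /andP[].
have hgI : forall i, g i \in I_code n t lam z alpha (beta i).
  by move=> i; have := hg i; rewrite !inE => /andP[].
apply/ffunP => i; apply/eqP; rewrite -subr_eq0; apply/eqP.
apply: (ev_zero_of H) => i0 hi0; rewrite evB.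
case: (boolP (((1 + t * i0) %% (t * n))%N \in cycl_coset #|F| (t * n) (1 + t * alpha (beta i)))) => hC.
  by rewrite -(ev_sum_in H Hdisj hfI hC) -(ev_sum_in H Hdisj hgI hC) e subrr.
by rewrite (vanish H (hfI i) hC) (vanish H (hgI i) hC) subrr.
Qed.

Unset Implicit Arguments.
Set Strict Implicit.

Theorem lemma3 (F : finFieldType) (L : fieldExtType F) (n t : nat) (lam : F)
  (z : L) (s : nat) (alpha : nat -> nat) (l : nat) (beta : nat -> nat) :
  (0 < n)%N ->
  coprime n #|F| ->
  t.-primitive_root lam ->
  (t * n)%N.-primitive_root z ->
  z ^+ n = lam%:A ->
  (* the coset representatives 1 + t alpha_j, j = 0..s *)
  alpha 0%N = 0%N ->
  (forall j, (j < s)%N -> (alpha j < alpha j.+1)%N) ->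
  (alpha s <= n.-1)%N ->
  (forall j k, (j <= s)%N -> (k <= s)%N -> j != k ->
     ~ (cycl_coset #|F| (t * n) (1 + t * alpha j)
        =i cycl_coset #|F| (t * n) (1 + t * alpha k))) ->
  (forall i, (i < n)%N -> exists2 j, (j <= s)%N &
     ((1 + t * i) %% (t * n))%N \in cycl_coset #|F| (t * n) (1 + t * alpha j)) ->
  (* the indices beta_1 < ... < beta_l in {0..s} *)
  (1 <= l <= s.+1)%N ->
  (forall i, (i.+1 < l)%N -> (beta i < beta i.+1)%N) ->
  (forall i, (i < l)%N -> (beta i <= s)%N) ->
  (norbits (rho lam) (C_beta n t lam z alpha l beta) * (t * n) =
   (\prod_(i < l) (#|F| ^ d_dim #|F| n t alpha (beta i) - 1)) *
   gcdn (\big[gcdn/0]_(i < l) (1 + t * alpha (beta i))) n)%N.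
Proof.
move=> n0 cnq pl pz zn _ _ _ hdist _ /andP[l0 _] hinc hle.
have H : @hyps F L n t lam z by split.
have Hdisj := Hdisj_of H hdist hinc hle.
set Gg := (\big[gcdn/0]_(i < l) (1 + t * alpha (beta i)))%N.
have m0 := hyps_m0 H.
have key := @norbits_mul _ (rho lam) (C_beta n t lam z alpha l beta)
  ((t * n) %/ gcdn (t * n) Gg)%N (rho_inj H) (@C_closed _ _ _ _ _ _ H alpha l beta) (C_order H Hdisj).
rewrite (C_card H Hdisj) in key.
have cG : coprime Gg t.
  have i0 : 'I_l := Ordinal l0.
  apply: (coprime_dvdl (n := (1 + t * alpha (beta i0))%N)).
    by apply: (biggcdn_inf i0) => //.
  by rewrite coprime_sym -coprime_modr rt coprime_modr coprimen1.
have eg : gcdn (t * n) Gg = gcdn Gg n by rewrite gcdnC mulnC Gauss_gcdl.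
have em : (t * n = (t * n) %/ gcdn (t * n) Gg * gcdn (t * n) Gg)%N.
  by rewrite divnK // dvdn_gcdl.
by rewrite {1}em mulnA key eg.
Qed.
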